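(* Let $z\in\mathbf{Z}$, $z\neq0$, and let $m\geq0$ be such that $z\in\mathfrak{C}_0^m\mathbf{Z}$. Write $z=\sum_{w\in W}z_w w$ with $z_w\in\mathbb{C}[\mathcal{C}]\otimes\mathbb{C}[V]\otimes\mathbb{C}[V^*]$. Then $z_w\in\mathfrak{C}_0^{m+1}\bigl(\mathbb{C}[\mathcal{C}]\otimes\mathbb{C}[V]\otimes\mathbb{C}[V^*]\bigr)$ for all $w\in W\setminus\{1\}$.
   Context: Let $V$ be a finite-dimensional complex vector space and $W\subseteq\mathrm{GL}(V)$ a finite group generated by its set $\mathrm{Ref}(W)$ of reflections. Let $\varepsilon=\det$. For $s\in\mathrm{Ref}(W)$ choose $\alpha_s\in V^*$ with $(V^s)^\perp=\mathbb{C}\alpha_s$ and $\alpha_s^\vee\in V$ with $((V^* )^s)^\perp=\mathbb{C}\alpha_s^\vee$; identify $\mathbb{C}[V]=S(V^* )$, $\mathbb{C}[V^*]=S(V)$. $\mathbb{C}[\mathcal{C}]$ is the polynomial ring in indeterminates $C_s$ indexed by conjugacy classes of reflections. The generic rational Cherednik algebra $\mathbf{H}$ (at $t=0$) is the quotient of $\mathbb{C}[\mathcal{C}]\otimes(T(V\oplus V^* )\rtimes W)$ by $[x,x']=[y,y']=0$ and $[y,x]=\sum_{s}(\varepsilon(s)-1)C_s\frac{\langle y,\alpha_s\rangle\langle\alpha_s^\vee,x\rangle}{\langle\alpha_s^\vee,\alpha_s\rangle}s$ ($x,x'\in V^*$, $y,y'\in V$). By the PBW theorem every element of $\mathbf{H}$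 is uniquely $\sum_{w\in W}h_w w$ with $h_w\in\mathbb{C}[\mathcal{C}]\otimes\mathbb{C}[V]\otimes\mathbb{C}[V^*]$. $\mathbf{Z}$ is the center of $\mathbf{H}$ and $\mathfrak{C}_0$ the ideal of $\mathbb{C}[\mathcal{C}]$ generated by all $C_s$. *)

(* Defs.v *)
From HB Require Import structures.
From mathcomp Require Import all_boot all_order all_algebra all_fingroup.
From mathcomp Require Import mxrepresentation.
From mathcomp Require Import reals.
From mathcomp Require Import complex.
From mathcomp Require Import mpoly.

Set Implicit Arguments.
Unset Strict Implicit.
Unset Printing Implicit Defensive.

Import GRing.Theory Num.Theory.
Local Open Scope ring_scope.

(* Conventions.  n = dim V.  V = column vectors 'cV_n, Vdual = row vectors 'rV_n,
   with pairing <x, v> = (x *m v) 0 0.  The finite group W (a group in a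
   finGroupType gT) acts on V through a representation rG : g |-> rG g
   (g . v = rG g *m v) and hence on Vdual contragrediently
   (g . x = x *m rG g^-1). *)

Section Defs.

Variable C : fieldType.
Variable n : nat.

Definition pairing (x : 'rV[C]_n) (v : 'cV[C]_n) : C := (x *m v) 0 0.

Variable gT : finGroupType.
Variable W : {group gT}.
Variable rG : mx_representation C W n.

(* s is a reflection: its fixed space V^s is a hyperplane, i.e. rank(s - 1) = 1 *)
Definition reflections : {set gT} :=
  [set s in W | \rank (rG s - 1%:M) == 1%N].

(* (V^s)^perp = C a   (inside Vdual) *)
Definition root_spec (s : gT) (a : 'rV[C]_n) : Prop :=
  forall x : 'rV[C]_n,
    (exists c : C, x = c *: a) <->
    (forall v : 'cV[C]_n, rG s *m v = v -> pairing x v = 0).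

(* ((Vdual )^s)^perp = C b   (inside V) *)
Definition coroot_spec (s : gT) (b : 'cV[C]_n) : Prop :=
  forall v : 'cV[C]_n,
    (exists c : C, v = c *: b) <->
    (forall x : 'rV[C]_n, x *m rG (s^-1)%g = x -> pairing x v = 0).

End Defs.

(* Powers of an ideal generated by a finite family: p lies in I^m, where
   I is the ideal of the commutative ring A generated by g_0, ..., g_{k-1},
   iff p is a finite sum of (ring element) * (product of m generators). *)
Definition in_ideal_pow (A : comPzRingType) (k : nat) (g : 'I_k -> A) (m : nat)
  (p : A) : Prop :=
  exists (N : nat) (a : 'I_N -> A) (f : 'I_N -> 'I_m -> 'I_k),
    p = \sum_(i < N) a i * \prod_(j < m) g (f i j).

(* The polynomial ring C[C] (x) C[V] (x) C[Vdual] is modelled as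
   {mpoly C[k + n + n]}: variables lshift n (lshift n c) are the C_c
   (c < k, one per conjugacy class of reflections), variables
   lshift n (rshift k i) are the coordinates x_i (basis of Vdual),
   and rshift (k + n) i are the y_i (basis of V). *)
Section Vars.
Variables k n : nat.
Definition cvar (c : 'I_k) : 'I_(k + n + n) := lshift n (lshift n c).
Definition xvar (i : 'I_n) : 'I_(k + n + n) := lshift n (rshift k i).
Definition yvar (i : 'I_n) : 'I_(k + n + n) := rshift (k + n) i.
End Vars.

Section Alg.
Variable C : fieldType.
Variables k n : nat.
Variable H : algType C.
Variable Cv : 'I_k -> H.   (* images of the C_c in H *)
Variable X : 'I_n -> H.    (* images of the basis x_i of Vdual *)
Variable Y : 'I_n -> H.    (* images of the basis y_i of V *)

Definition centralH (z : H) : Prop := forall h : H, z * h = h * z.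

Definition Xl (x : 'rV[C]_n) : H := \sum_(i < n) x 0 i *: X i.
Definition Yl (v : 'cV[C]_n) : H := \sum_(i < n) v i 0 *: Y i.

Definition evalC (p : {mpoly C[k]}) : H :=
  \sum_(mm <- msupp p) p@_mm *: \prod_(c < k) Cv c ^+ mm c.

(* the PBW embedding of C[C] (x) C[V] (x) C[Vdual] into H, f (x) g (x) h |-> f g h
   (C-part, then x-part, then y-part) *)
Definition evalA (p : {mpoly C[k + n + n]}) : H :=
  \sum_(mm <- msupp p) p@_mm *:
     ((\prod_(c < k) Cv c ^+ mm (@cvar k n c)) *
      (\prod_(i < n) X i ^+ mm (@xvar k n i)) *
      (\prod_(i < n) Y i ^+ mm (@yvar k n i))).

Variable gT : finGroupType.
Variable W : {group gT}.
Variable T : gT -> H.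

Definition pbw (h : {ffun gT -> {mpoly C[k + n + n]}}) : H :=
  \sum_(w in W) evalA (h w) * T w.

Definition in_C0pow_center (m : nat) (z : H) : Prop :=
  exists (N : nat) (c : 'I_N -> {mpoly C[k]}) (u : 'I_N -> H),
    (forall i, in_ideal_pow (fun j : 'I_k => 'X_j) m (c i)) /\
    (forall i, centralH (u i)) /\
    z = \sum_(i < N) evalC (c i) * u i.

End Alg.

(* Generic rational Cherednik algebra at t = 0, given by generators satisfying
   the defining relations together with the PBW property (which determines it
   up to isomorphism). *)
Definition is_generic_RCA (R : realType) (n : nat) (gT : finGroupType)
  (W : {group gT}) (rG : mx_representation R[i] W n) (k : nat)
  (cls : gT -> 'I_k) (root : gT -> 'rV[R[i]]_n) (coroot : gT -> 'cV[R[i]]_n)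
  (H : algType R[i]) (Cv : 'I_k -> H) (X Y : 'I_n -> H) (T : gT -> H) : Prop :=
  (
      forall c, centralH (Cv c)) /\
      (forall i j, X i * X j = X j * X i) /\
      (forall i j, Y i * Y j = Y j * Y i) /\
      (T 1%g = 1 /\ {in W &, forall g h, T (g * h)%g = T g * T h}) /\
      ({in W, forall g (x : 'rV[R[i]]_n),
         T g * Xl X x * T (g^-1)%g = Xl X (x *m rG (g^-1)%g)} /\
      {in W, forall g (v : 'cV[R[i]]_n),
         T g * Yl Y v * T (g^-1)%g = Yl Y (rG g *m v)}) /\
      (forall (x : 'rV[R[i]]_n) (v : 'cV[R[i]]_n),
        Yl Y v * Xl X x - Xl X x * Yl Y v =
        \sum_(s in reflections rG)
          ((\det (rG s) - 1) * pairing (root s) v * pairing x (coroot s)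
             / pairing (root s) (coroot s)) *: (Cv (cls s) * T s)) /\
      (forall h : H, exists f, h = pbw Cv X Y W T f) /\
      (forall f, pbw Cv X Y W T f = 0 -> forall w, w \in W -> f w = 0).

(* Main.v *)
Require Import Defs.
From HB Require Import structures.
From mathcomp Require Import all_boot all_order all_algebra all_fingroup.
From mathcomp Require Import mxrepresentation.
From mathcomp Require Import reals.
From mathcomp Require Import complex.
From mathcomp Require Import mpoly.
From mathcomp Require Import zify.
Import GRing.Theory Num.Theory.
Local Open Scope ring_scope.
Set Implicit Arguments.
Unset Strict Implicit.
Unset Printing Implicit Defensive.

Section EvalS.
Variables (F : fieldType) (N : nat) (H : algType F) (g : 'X_{1..N} -> H).
Definition evalS (p : {mpoly F[N]}) : H := \sum_(m <- msupp p) p@_m *: g m.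

Lemma evalS_seq p s : uniq s -> {subset msupp p <= s} ->
  evalS p = \sum_(m <- s) p@_m *: g m.
Proof.
move=> us sub; rewrite /evalS [RHS](bigID (fun m => m \in msupp p)) /=.
rewrite [X in _ = _ + X]big1 ?addr0; last first.
  by move=> m /memN_msupp_eq0 ->; rewrite scale0r.
rewrite -[RHS]big_filter; apply: perm_big; apply: uniq_perm.
- exact: msupp_uniq.
- by rewrite filter_uniq.
- move=> m; rewrite mem_filter; case E: (m \in msupp p) => //=.
  by rewrite (sub _ E).
Qed.

Lemma evalSD p q : evalS (p + q) = evalS p + evalS q.
Proof.
set s := undup (msupp p ++ msupp q ++ msupp (p + q)).
have us : uniq s by apply: undup_uniq.
rewrite !(@evalS_seq _ s us); first last.
- by move=> m Hm; rewrite mem_undup !mem_cat Hm ?orbT.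
- by move=> m Hm; rewrite mem_undup !mem_cat Hm ?orbT.
- by move=> m Hm; rewrite mem_undup !mem_cat Hm ?orbT.
by rewrite -big_split; apply: eq_bigr => m _; rewrite mcoeffD scalerDl.
Qed.

Lemma evalS0 : evalS 0 = 0.
Proof. by rewrite /evalS msupp0 big_nil. Qed.

Lemma evalSZ c p : evalS (c *: p) = c *: evalS p.
Proof.
set s := undup (msupp p ++ msupp (c *: p)).
have us : uniq s by apply: undup_uniq.
rewrite !(@evalS_seq _ s us); first last.
- by move=> m Hm; rewrite mem_undup !mem_cat Hm ?orbT.
- by move=> m Hm; rewrite mem_undup !mem_cat Hm ?orbT.
by rewrite scaler_sumr; apply: eq_bigr => m _; rewrite mcoeffZ scalerA.
Qed.

Lemma evalSX m : evalS 'X_[m] = g m.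
Proof. by rewrite /evalS msuppX big_seq1 mcoeffX eqxx scale1r. Qed.

Lemma evalSN p : evalS (- p) = - evalS p.
Proof. by rewrite -scaleN1r evalSZ scaleN1r. Qed.

Lemma evalSB p q : evalS (p - q) = evalS p - evalS q.
Proof. by rewrite evalSD evalSN. Qed.

Lemma evalS_sum (I : Type) (r : seq I) (P : pred I) (Fp : I -> {mpoly F[N]}) :
  evalS (\sum_(i <- r | P i) Fp i) = \sum_(i <- r | P i) evalS (Fp i).
Proof. exact: (big_morph evalS evalSD evalS0). Qed.
End EvalS.

Lemma prod_exprD_seq (S : pzRingType) (I : Type) (r : seq I) (h : I -> S) e1 e2 :
  (forall i j, GRing.comm (h i) (h j)) ->
  \prod_(i <- r) h i ^+ (e1 i + e2 i) =
  \prod_(i <- r) h i ^+ e1 i * \prod_(i <- r) h i ^+ e2 i.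
Proof.
move=> hc; elim: r => [|a r IH]; first by rewrite !big_nil mulr1.
rewrite !big_cons IH exprD -!mulrA; congr (_ * _); rewrite !mulrA; congr (_ * _).
apply: commr_prod => i _; apply: commrX; apply/commr_sym; apply: commrX.
exact: hc.
Qed.

Lemma prod_delta (S : pzRingType) (I : finType) (h : I -> S) (i0 : I) :
  \prod_i h i ^+ (i0 == i) = h i0.
Proof.
rewrite (eq_bigr (fun i => if i == i0 then h i else 1)) => [|i _]; last first.
  by rewrite eq_sym; case: (i == i0); rewrite ?expr1 ?expr0.
by rewrite -big_mkcond big_pred1_eq.
Qed.

Lemma prod_delta_add (S : pzRingType) (I : finType) (h : I -> S) (i0 : I) e :
  (forall i j, GRing.comm (h i) (h j)) ->
  \prod_i h i ^+ ((i0 == i) + e i)%N = h i0 * \prod_i h i ^+ e i.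
Proof. by move=> hc; rewrite prod_exprD_seq // prod_delta. Qed.

Definition ord0_elim (T : Type) (i : 'I_0) : T.
Proof. by case: i. Defined.

Section Ideal.
Variables (A : comPzRingType) (kk : nat) (g : 'I_kk -> A).
Local Notation ip := (in_ideal_pow g).

Lemma ip0 m : ip m 0.
Proof.
exists 0%N, (fun i => ord0_elim _ i), (fun i => ord0_elim _ i).
by rewrite big_ord0.
Qed.

Lemma split_l (a b : nat) (j : 'I_a) : split (lshift b j) = inl j.
Proof. exact: (unsplitK (inl _ j)). Qed.
Lemma split_r (a b : nat) (j : 'I_b) : split (rshift a j) = inr j.
Proof. exact: (unsplitK (inr _ j)). Qed.

Lemma ipD m p q : ip m p -> ip m q -> ip m (p + q).
Proof.
move=> [N1 [a1 [f1 ->]]] [N2 [a2 [f2 ->]]].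
exists (N1 + N2)%N,
  (fun i => match split i with inl j => a1 j | inr j => a2 j end),
  (fun i => match split i with inl j => f1 j | inr j => f2 j end).
rewrite big_split_ord /=; congr (_ + _); apply: eq_bigr => i _.
- by rewrite split_l.
- by rewrite split_r.
Qed.

Lemma ipM m r p : ip m p -> ip m (r * p).
Proof.
move=> [N1 [a1 [f1 ->]]]; exists N1, (fun i => r * a1 i), f1.
by rewrite mulr_sumr; apply: eq_bigr => i _; rewrite mulrA.
Qed.

Lemma ip_sum m (I : Type) (s : seq I) (P : pred I) (Fp : I -> A) :
  (forall i, P i -> ip m (Fp i)) -> ip m (\sum_(i <- s | P i) Fp i).
Proof.
move=> h; apply: (big_ind (ip m)); [exact: ip0 | exact: ipD | exact: h].
Qed.

Lemma ip_gen m p c : ip m p -> ip m.+1 (p * g c).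
Proof.
move=> [N1 [a1 [f1 ->]]].
exists N1, a1, (fun i (j : 'I_m.+1) => odflt c (omap (f1 i) (insub (val j)))).
rewrite mulr_suml; apply: eq_bigr => i _.
rewrite big_ord_recr /= -mulrA; congr (_ * _); congr (_ * _).
- apply: eq_bigr => j _ /=.
  by rewrite valK.
- by rewrite insubF //= ltnn.
Qed.

Lemma ip_mul1 m p q : ip m p -> ip 1 q -> ip m.+1 (p * q).
Proof.
move=> hp [N2 [a2 [f2 ->]]]; rewrite mulr_sumr; apply: ip_sum => i _.
rewrite big_ord1 mulrCA; apply: ipM; exact: ip_gen.
Qed.

Lemma ip_gen1 c : ip 1 (g c).
Proof.
exists 1%N, (fun _ => 1), (fun _ _ => c).
by rewrite big_ord1 big_ord1 mul1r.
Qed.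

Lemma ip_morph (B : comPzRingType) (phi : {rmorphism A -> B}) (g' : 'I_kk -> B) m p :
  (forall j, phi (g j) = g' j) -> ip m p -> in_ideal_pow g' m (phi p).
Proof.
move=> hg [N1 [a1 [f1 ->]]]; exists N1, (fun i => phi (a1 i)), f1.
rewrite rmorph_sum; apply: eq_bigr => i _; rewrite rmorphM rmorph_prod.
by congr (_ * _); apply: eq_bigr => j _; rewrite hg.
Qed.

End Ideal.

Section Vars.
Variables k n : nat.
Lemma cvar_val c : val (@cvar k n c) = val c. Proof. by []. Qed.
Lemma xvar_val i : val (@xvar k n i) = (k + val i)%N. Proof. by []. Qed.
Lemma yvar_val i : val (@yvar k n i) = (k + n + val i)%N. Proof. by []. Qed.
Lemma cc_eq c c' : (@cvar k n c == @cvar k n c') = (c == c').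
Proof. by rewrite -val_eqE /= val_eqE. Qed.
Lemma xx_eq i i' : (@xvar k n i == @xvar k n i') = (i == i').
Proof. by rewrite -val_eqE /= eqn_add2l val_eqE. Qed.
Lemma yy_eq i i' : (@yvar k n i == @yvar k n i') = (i == i').
Proof. by rewrite -val_eqE /= eqn_add2l val_eqE. Qed.
Lemma cx_eq c i : (@cvar k n c == @xvar k n i) = false.
Proof. apply/negbTE; rewrite -val_eqE /=; have := ltn_ord c; lia. Qed.
Lemma xc_eq c i : (@xvar k n i == @cvar k n c) = false.
Proof. by rewrite eq_sym cx_eq. Qed.
Lemma cy_eq c i : (@cvar k n c == @yvar k n i) = false.
Proof. apply/negbTE; rewrite -val_eqE /=; have := ltn_ord c; lia. Qed.
Lemma xy_eq i j : (@xvar k n i == @yvar k n j) = false.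
Proof. apply/negbTE; rewrite -val_eqE /=; have := ltn_ord i; lia. Qed.
End Vars.

Section Alg.
Variables (F : fieldType) (k n : nat) (H : algType F).
Variables (Cv : 'I_k -> H) (X Y : 'I_n -> H).
Hypothesis hC : forall c, centralH (Cv c).
Hypothesis hX : forall i j, X i * X j = X j * X i.
Hypothesis hY : forall i j, Y i * Y j = Y j * Y i.

Definition mon (mm : 'X_{1..k+n+n}) : H :=
  (\prod_(c < k) Cv c ^+ mm (@cvar k n c)) *
  (\prod_(i < n) X i ^+ mm (@xvar k n i)) *
  (\prod_(i < n) Y i ^+ mm (@yvar k n i)).

Lemma evalAE p : evalA Cv X Y p = evalS mon p. Proof. by []. Qed.

Lemma Cprod_central (e : 'I_k -> nat) : centralH (\prod_(c < k) Cv c ^+ e c).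
Proof.
move=> h; apply/esym; apply: commr_prod => c _; apply: commrX.
by rewrite /GRing.comm hC.
Qed.

Lemma mon_cvar c m : mon (U_(@cvar k n c) + m) = Cv c * mon m.
Proof.
rewrite /mon !mulrA; congr (_ * _ * _).
- rewrite (eq_bigr (fun c' => Cv c' ^+ ((c == c') + m (@cvar k n c'))%N)) => [|c' _].
    rewrite prod_delta_add //; by move=> i j; rewrite /GRing.comm hC.
  by rewrite mnmDE mnm1E cc_eq.
- by apply: eq_bigr => i _; rewrite mnmDE mnm1E cx_eq.
- by apply: eq_bigr => i _; rewrite mnmDE mnm1E cy_eq.
Qed.

Lemma mon_xvar i m : mon (U_(@xvar k n i) + m) = X i * mon m.
Proof.
rewrite /mon.
have -> : \prod_(c < k) Cv c ^+ (U_(@xvar k n i) + m)%MM (@cvar k n c) =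
          \prod_(c < k) Cv c ^+ m (@cvar k n c).
  by apply: eq_bigr => c _; rewrite mnmDE mnm1E xc_eq.
have -> : \prod_(j < n) Y j ^+ (U_(@xvar k n i) + m)%MM (@yvar k n j) =
          \prod_(j < n) Y j ^+ m (@yvar k n j).
  by apply: eq_bigr => j _; rewrite mnmDE mnm1E xy_eq.
rewrite (eq_bigr (fun j => X j ^+ ((i == j) + m (@xvar k n j))%N)) => [|j _]; last first.
  by rewrite mnmDE mnm1E xx_eq.
rewrite prod_delta_add // !mulrA Cprod_central.
by [].

Qed.

Definition acts (p : {mpoly F[k+n+n]}) (P : H) :=
  forall q, evalA Cv X Y (p * q) = P * evalA Cv X Y q.

Lemma acts_X v P : (forall m, mon (U_(v) + m) = P * mon m) -> acts 'X_v P.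
Proof.
move=> hm q; rewrite {1}[q]mpolyE mulr_sumr !evalAE evalS_sum.
rewrite [X in _ = _ * X]/evalS mulr_sumr; apply: eq_bigr => m _.
by rewrite -scalerAr -mpolyXD evalSZ evalSX hm scalerAr.
Qed.

Lemma acts_cvar c : acts 'X_(@cvar k n c) (Cv c).
Proof. apply: acts_X => m; exact: mon_cvar. Qed.
Lemma acts_xvar i : acts 'X_(@xvar k n i) (X i).
Proof. apply: acts_X => m; exact: mon_xvar. Qed.

Lemma acts1 : acts 1 1.
Proof. by move=> q; rewrite !mul1r. Qed.
Lemma acts0 : acts 0 0.
Proof. by move=> q; rewrite !mul0r !evalAE evalS0. Qed.
Lemma actsM p1 P1 p2 P2 : acts p1 P1 -> acts p2 P2 -> acts (p1 * p2) (P1 * P2).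
Proof. by move=> h1 h2 q; rewrite -mulrA h1 h2 mulrA. Qed.
Lemma actsD p1 P1 p2 P2 : acts p1 P1 -> acts p2 P2 -> acts (p1 + p2) (P1 + P2).
Proof. by move=> h1 h2 q; rewrite mulrDl !evalAE evalSD -!evalAE h1 h2 mulrDl. Qed.
Lemma actsZ c p P : acts p P -> acts (c *: p) (c *: P).
Proof. by move=> h q; rewrite -scalerAl !evalAE evalSZ -!evalAE h scalerAl. Qed.
Lemma actsX p P e : acts p P -> acts (p ^+ e) (P ^+ e).
Proof.
move=> h; elim: e => [|e IH]; first by rewrite !expr0; exact: acts1.
by rewrite !exprS; apply: actsM.
Qed.

Definition lin (y : 'rV[F]_n) : {mpoly F[k+n+n]} :=
  \sum_(i < n) y 0 i *: 'X_(@xvar k n i).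

Lemma acts_lin y : acts (lin y) (Xl X y).
Proof.
apply: (big_ind2 acts acts0 (fun _ _ _ _ => @actsD _ _ _ _)) => i _.
apply: actsZ; exact: acts_xvar.
Qed.

Definition iota_t : k.-tuple {mpoly F[k+n+n]} := [tuple 'X_(@cvar k n c) | c < k].
Definition iotaC (c : {mpoly F[k]}) : {mpoly F[k+n+n]} := comp_mpoly iota_t c.

Lemma acts_iota c : acts (iotaC c) (evalC Cv c).
Proof.
rewrite /iotaC {1}[c]mpolyE raddf_sum /evalC.
apply: (big_ind2 acts acts0 (fun _ _ _ _ => @actsD _ _ _ _)) => m _.
rewrite /= comp_mpolyZ; apply: actsZ; rewrite comp_mpolyX.
apply: (big_ind2 acts acts1 (fun _ _ _ _ => @actsM _ _ _ _)) => j _.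
rewrite tnth_mktuple; apply: actsX; exact: acts_cvar.
Qed.

End Alg.

Section M.
Variables (F : fieldType) (k n : nat) (H : algType F).
Variables (Cv : 'I_k -> H) (X Y : 'I_n -> H).
Hypothesis hC : forall c, centralH (Cv c).
Hypothesis hX : forall i j, X i * X j = X j * X i.
Hypothesis hY : forall i j, Y i * Y j = Y j * Y i.

Definition inM (h : H) := exists s : seq ('I_k * H), h = \sum_(p <- s) Cv p.1 * p.2.

Lemma inM0 : inM 0.
Proof. by exists [::]; rewrite big_nil. Qed.
Lemma inMD a b : inM a -> inM b -> inM (a + b).
Proof. by move=> [s1 ->] [s2 ->]; exists (s1 ++ s2); rewrite big_cat. Qed.
Lemma inM_mull a h : inM h -> inM (a * h).
Proof.
move=> [s ->]; exists (map (fun p => (p.1, a * p.2)) s).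
rewrite big_map mulr_sumr; apply: eq_bigr => p _ /=.
by rewrite mulrA -hC -mulrA.
Qed.
Lemma inM_mulr h b : inM h -> inM (h * b).
Proof.
move=> [s ->]; exists (map (fun p => (p.1, p.2 * b)) s).
by rewrite big_map mulr_suml; apply: eq_bigr => p _ /=; rewrite mulrA.
Qed.
Lemma inMZ c h : inM h -> inM (c *: h).
Proof. by move=> hh; rewrite -mulr_algl; apply: inM_mull. Qed.
Lemma inMN h : inM h -> inM (- h).
Proof. by move=> hh; rewrite -scaleN1r; apply: inMZ. Qed.
Lemma inMB a b : inM a -> inM b -> inM (a - b).
Proof. by move=> ha hb; apply: inMD => //; apply: inMN. Qed.
Lemma inM_sum (I : Type) (r : seq I) (P : pred I) (Fh : I -> H) :
  (forall i, P i -> inM (Fh i)) -> inM (\sum_(i <- r | P i) Fh i).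
Proof. by move=> h; apply: (big_ind inM inM0 inMD). Qed.
Lemma inM_Cv c h : inM (Cv c * h).
Proof. by exists [:: (c, h)]; rewrite big_seq1. Qed.

Definition cm (a x : H) := inM (a * x - x * a).

Lemma cm_exact a x : a * x = x * a -> cm a x.
Proof. by move=> e; rewrite /cm e subrr; exact: inM0. Qed.
Lemma cmM a b x : cm a x -> cm b x -> cm (a * b) x.
Proof.
move=> ha hb; rewrite /cm.
have -> : a * b * x - x * (a * b) = a * (b * x - x * b) + (a * x - x * a) * b.
  by rewrite mulrBr mulrBl !mulrA addrA subrK.
by apply: inMD; [apply: inM_mull | apply: inM_mulr].
Qed.
Lemma cm1 x : cm 1 x.
Proof. by apply: cm_exact; rewrite mul1r mulr1. Qed.
Lemma cm0 x : cm 0 x.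
Proof. by apply: cm_exact; rewrite mul0r mulr0. Qed.
Lemma cmD a b x : cm a x -> cm b x -> cm (a + b) x.
Proof.
move=> ha hb; rewrite /cm mulrDl mulrDr.
have -> : a * x + b * x - (x * a + x * b) = (a * x - x * a) + (b * x - x * b).
  by rewrite opprD !addrA; congr (_ + _); rewrite -!addrA; congr (_ + _); rewrite addrC.
exact: inMD.
Qed.
Lemma cmZ c a x : cm a x -> cm (c *: a) x.
Proof. by move=> ha; rewrite /cm -scalerAl -scalerAr -scalerBr; apply: inMZ. Qed.
Lemma cmX a x e : cm a x -> cm (a ^+ e) x.
Proof.
move=> ha; elim: e => [|e IH]; first by rewrite expr0; exact: cm1.
by rewrite exprS; apply: cmM.
Qed.
Lemma cm_prod (I : Type) (r : seq I) (P : pred I) (Fh : I -> H) x :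
  (forall i, P i -> cm (Fh i) x) -> cm (\prod_(i <- r | P i) Fh i) x.
Proof. by move=> h; apply: (big_ind (cm^~ x) (cm1 x) (fun a b => @cmM a b x)). Qed.
Lemma cm_sum (I : Type) (r : seq I) (P : pred I) (Fh : I -> H) x :
  (forall i, P i -> cm (Fh i) x) -> cm (\sum_(i <- r | P i) Fh i) x.
Proof. by move=> h; apply: (big_ind (cm^~ x) (cm0 x) (fun a b => @cmD a b x)). Qed.

Lemma cm_evalA x q :
  (forall c, cm (Cv c) x) -> (forall i, cm (X i) x) -> (forall i, cm (Y i) x) ->
  cm (evalA Cv X Y q) x.
Proof.
move=> h1 h2 h3; rewrite evalAE /evalS; apply: cm_sum => m _; apply: cmZ.
rewrite /mon; apply: cmM; first apply: cmM; apply: cm_prod => i _; apply: cmX; auto.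
Qed.

Variables (gT : finGroupType) (W : {group gT}) (T : gT -> H).
Local Notation pbw := (pbw Cv X Y W T).
Local Notation eA := (evalA Cv X Y).

Lemma eA0 : eA 0 = 0. Proof. by rewrite evalAE evalS0. Qed.
Lemma eAD p q : eA (p + q) = eA p + eA q. Proof. by rewrite !evalAE evalSD. Qed.
Lemma eAB p q : eA (p - q) = eA p - eA q. Proof. by rewrite !evalAE evalSB. Qed.
Lemma eA_sum (I : Type) (r : seq I) (P : pred I) (Fp : I -> {mpoly F[k+n+n]}) :
  eA (\sum_(i <- r | P i) Fp i) = \sum_(i <- r | P i) eA (Fp i).
Proof. by rewrite evalAE evalS_sum. Qed.

Lemma pbw0 : pbw 0 = 0.
Proof. by rewrite /pbw big1 // => w _; rewrite ffunE eA0 mul0r. Qed.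
Lemma pbwD f1 f2 : pbw (f1 + f2) = pbw f1 + pbw f2.
Proof. by rewrite /pbw -big_split; apply: eq_bigr => w _; rewrite ffunE eAD mulrDl. Qed.
Lemma pbwB f1 f2 : pbw (f1 - f2) = pbw f1 - pbw f2.
Proof.
rewrite /pbw -sumrB; apply: eq_bigr => w _.
by rewrite !ffunE eAB mulrBl.
Qed.

Hypothesis hex : forall h : H, exists f, h = pbw f.
Hypothesis huniq : forall f, pbw f = 0 -> forall w, w \in W -> f w = 0.

Lemma pbw_inj f1 f2 w : pbw f1 = pbw f2 -> w \in W -> f1 w = f2 w.
Proof.
move=> e hw; apply/eqP; rewrite -subr_eq0; apply/eqP.
have := @huniq (f1 - f2); rewrite pbwB e subrr => /(_ erefl w hw) /eqP.
by rewrite !ffunE => /eqP.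
Qed.

Definition I1 (p : {mpoly F[k+n+n]}) := in_ideal_pow (fun c => 'X_(@cvar k n c)) 1 p.

Lemma inM_coef h : inM h -> exists G, h = pbw G /\ forall w, I1 (G w).
Proof.
move=> [s ->]; elim: s => [|[c h0] s [G [eG hG]]].
  by exists 0; rewrite big_nil pbw0; split=> // w; rewrite ffunE; exact: ip0.
have [G0 ->] := hex h0.
exists ([ffun w => 'X_(@cvar k n c) * G0 w] + G); split.
  rewrite big_cons pbwD eG /=; congr (_ + _).
  rewrite /pbw mulr_sumr; apply: eq_bigr => w _.
  by rewrite ffunE (@acts_cvar _ _ _ _ Cv X Y hC) mulrA.
move=> w; rewrite !ffunE; apply: ipD.
  rewrite mulrC; apply: ipM; exact: (ip_gen1 (fun c0 : 'I_k => 'X_(@cvar k n c0))).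
exact: hG.
Qed.

End M.

Section Sig.
Variables (F : fieldType) (k n : nat).
Local Notation A := {mpoly F[k+n+n]}.
Local Notation I1 := (@I1 F k n).

Definition tsig : (k+n+n).-tuple A :=
  [tuple (if (val v < k)%N then 0 else 'X_v) | v < k+n+n].
Local Notation sigma := (comp_mpoly tsig).

Lemma sigma_X v : sigma 'X_v = if (val v < k)%N then 0 else 'X_v.
Proof. by rewrite comp_mpolyXU -(tnth_nth 0) tnth_mktuple. Qed.

Lemma I1_sigma0 p : I1 p -> sigma p = 0.
Proof.
move=> [N [a [f ->]]]; rewrite rmorph_sum big1 // => i _.
rewrite rmorphM big_ord1 /= sigma_X /= ltn_ord mulr0 //.
Qed.

Lemma sigma0_I1 p : sigma p = 0 -> I1 p.
Proof.
move=> h; suff : I1 (p - sigma p) by rewrite h subr0.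
rewrite {1}[p]mpolyE comp_mpolyEX -sumrB; apply: ip_sum => m _.
rewrite -scalerBr -mul_mpolyC; apply: ipM.
rewrite comp_mpolyX -mmap1_id /mmap1.
pose Rc (x y : A) := I1 (x - y).
have RM : forall x1 y1 x2 y2, Rc x1 y1 -> Rc x2 y2 -> Rc (x1 * x2) (y1 * y2).
  move=> x1 y1 x2 y2 h1 h2; rewrite /Rc.
  have -> : x1 * x2 - y1 * y2 = x1 * (x2 - y2) + y2 * (x1 - y1).
    by rewrite mulrBr mulrBr [y2 * x1]mulrC addrA subrK [y2 * y1]mulrC.
  by apply: ipD; apply: ipM.
apply: (big_ind2 Rc); first by rewrite /Rc subrr; exact: ip0.
  exact: RM.
move=> v _; elim: (m v) => [|e IH]; first by rewrite !expr0 /Rc subrr; exact: ip0.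
rewrite !exprS; apply: RM => //; rewrite /Rc tnth_mktuple.
case: ifP => hv; last by rewrite subrr; exact: ip0.
rewrite subr0 (_ : v = @cvar k n (Ordinal hv)); last by apply: val_inj.
exact: (ip_gen1 (fun c0 : 'I_k => 'X_(@cvar k n c0))).
Qed.

Lemma sigma_lin (y : 'rV[F]_n) : sigma (lin k y) = lin k y.
Proof.
rewrite /lin rmorph_sum; apply: eq_bigr => i _.
rewrite /= comp_mpolyZ sigma_X /=.
by have -> : (k + i < k)%N = false by lia.
Qed.

Lemma linB (y1 y2 : 'rV[F]_n) : lin k (y1 - y2) = lin k y1 - lin k y2.
Proof.
rewrite /lin -sumrB; apply: eq_bigr => i _; by rewrite !mxE scalerBl.
Qed.

Lemma lin_coef (y : 'rV[F]_n) i : (lin k y)@_U_(@xvar k n i) = y 0 i.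
Proof.
rewrite /lin raddf_sum (bigD1 i) //= big1 ?addr0.
  by rewrite mcoeffZ mcoeffXU eqxx mulr1.
by move=> j hj; rewrite mcoeffZ mcoeffXU xx_eq (negbTE hj) mulr0.
Qed.

Lemma lin_neq0 (y : 'rV[F]_n) : y != 0 -> lin k y != 0.
Proof.
move=> hy; case: (pickP (fun i => y 0 i != 0)) => [i hi | h].
  by apply/eqP => e; move: hi; rewrite -lin_coef e mcoeff0 eqxx.
case/eqP: hy; apply/rowP => j; rewrite mxE.
by have := h j => /= /negbFE /eqP.
Qed.

Lemma I1_cancel (y : 'rV[F]_n) p : y != 0 -> I1 (lin k y * p) -> I1 p.
Proof.
move=> hy /I1_sigma0; rewrite rmorphM /= sigma_lin => /eqP.
rewrite mulf_eq0 (negbTE (lin_neq0 hy)) /= => /eqP; exact: sigma0_I1.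
Qed.

End Sig.

Unset Implicit Arguments.
Set Strict Implicit.

Theorem corollary3p2
  (R : realType) (n : nat) (gT : finGroupType) (W : {group gT})
  (rG : mx_representation R[i] W n)
  (faithful : mx_faithful rG)
  (gen_refl : W :=: <<reflections rG>>%g)
  (k : nat) (cls : gT -> 'I_k)
  (cls_onto : forall c : 'I_k, exists2 s, s \in reflections rG & cls s = c)
  (cls_conj : {in reflections rG &, forall s t,
                 cls s = cls t <-> exists2 g, g \in W & t = (s ^ g)%g})
  (root : gT -> 'rV[R[i]]_n) (coroot : gT -> 'cV[R[i]]_n)
  (root_ok : {in reflections rG, forall s, root_spec rG s (root s)})
  (coroot_ok : {in reflections rG, forall s, coroot_spec rG s (coroot s)})
  (H : algType R[i]) (Cv : 'I_k -> H) (X Y : 'I_n -> H) (T : gT -> H)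
  (HH : is_generic_RCA rG cls root coroot Cv X Y T)
  (z : H) (m : nat)
  (z_center : centralH z) (z_neq0 : z != 0)
  (z_in : in_C0pow_center Cv m z)
  (f : {ffun gT -> {mpoly R[i][k + n + n]}})
  (z_eq : z = pbw Cv X Y W T f) :
  forall w, w \in W -> w != 1%g ->
    in_ideal_pow (fun c : 'I_k => ('X_(@cvar k n c) : {mpoly R[i][k + n + n]}))
      m.+1 (f w).
Proof.
case: HH => hC [hX [hY [[T1 TM] [[hsx hsy] [hrel [hex huniq]]]]]].
have T_shift : forall w x, w \in W ->
    T w * Xl X x = Xl X (x *m rG (w^-1)%g) * T w.
  move=> w x hw; rewrite -(hsx w hw x) -!mulrA -TM ?groupV // mulVg T1 mulr1.
  by [].
have Yl_delta : forall l, Yl Y (delta_mx l 0) = Y l.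
  move=> l; rewrite /Yl (bigD1 l) //= big1 ?addr0.
    by rewrite mxE !eqxx scale1r.
  by move=> j hj; rewrite mxE (negbTE hj) scale0r.
have cmE : forall q y, cm Cv (evalA Cv X Y q) (Xl X y).
  move=> q y; apply: (cm_evalA hC).
  - by move=> c; apply: cm_exact; rewrite hC.
  - move=> i; apply: cm_exact; rewrite /Xl mulr_sumr mulr_suml.
    by apply: eq_bigr => j _; rewrite -scalerAr -scalerAl hX.
  - move=> l; rewrite /cm -Yl_delta hrel; apply: inM_sum => s _.
    by apply: (inMZ hC); apply: inM_Cv.
have key : forall u g, centralH u -> u = pbw Cv X Y W T g ->
    forall w, w \in W -> w != 1%g -> @I1 _ k n (g w).
  move=> u g hu eu w hw hw1.
  have [x hx] : exists x : 'rV[R[i]]_n, x *m rG (w^-1)%g != x.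
    case: (pickP (fun i => row i 1%:M *m rG (w^-1)%g != row i 1%:M)) => [i hi|hn].
      by exists (row i 1%:M).
    exfalso; move/negP: hw1; apply; rewrite -invg_eq1.
    have : (w^-1)%g \in [1 gT]%g.
      apply: (subsetP faithful); apply/rkerP; split; first by rewrite groupV.
      apply/row_matrixP => i; rewrite -[rG _]mul1mx row_mul.
      by have := hn i => /= /negbFE /eqP.
    by move/set1P => ->.
  set G1 := [ffun w' => lin k x * g w'].
  set G2 := [ffun w' => lin k (x *m rG (w'^-1)%g) * g w'].
  have e1 : Xl X x * pbw Cv X Y W T g = pbw Cv X Y W T G1.
    rewrite /pbw mulr_sumr; apply: eq_bigr => w' _.
    by rewrite ffunE (acts_lin Y hC hX) mulrA.
  have e2 : inM Cv (pbw Cv X Y W T g * Xl X x - pbw Cv X Y W T G2).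
    rewrite /pbw mulr_suml -sumrB; apply: inM_sum => w' hw'.
    rewrite ffunE (acts_lin Y hC hX) -mulrA T_shift // mulrA -mulrBl.
    by apply: inM_mulr; apply: cmE.
  move: e2; rewrite -eu hu eu e1 -pbwB => /(inM_coef hC hex) [G [eG hG]].
  have := pbw_inj huniq eG hw; rewrite !ffunE -mulrBl -linB => e.
  apply: (@I1_cancel _ k n (x - x *m rG (w^-1)%g) (g w)).
    by rewrite subr_eq0 eq_sym.
  by rewrite e.
move=> w hw hw1.
case: z_in => N [c [u [hc [hu ez]]]].
have [g hg] : exists g : 'I_N -> {ffun gT -> {mpoly R[i][k + n + n]}},
    forall i, u i = pbw Cv X Y W T (g i).
  exact: (fin_all_exists (fun i => hex (u i))).
set Fz := [ffun w' => \sum_(i < N) iotaC n (c i) * g i w'].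
have ez2 : z = pbw Cv X Y W T Fz.
  rewrite ez; under eq_bigr => i _ do rewrite hg /pbw mulr_sumr.
  rewrite exchange_big /=; apply: eq_bigr => w' hw'.
  rewrite ffunE eA_sum mulr_suml; apply: eq_bigr => i _.
  by rewrite (acts_iota X Y hC) mulrA.
have efw : f w = Fz w by apply: (pbw_inj huniq _ hw); rewrite -z_eq.
rewrite efw ffunE; apply: ip_sum => i _; apply: ip_mul1.
  apply: (@ip_morph _ _ _ _ (comp_mpoly (iota_t R[i] k n))) (hc i) => j.
  by rewrite /= comp_mpolyXU -(tnth_nth 0) tnth_mktuple.
exact: (key (u i) (g i) (hu i) (hg i) w hw hw1).
Qed.
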